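(* Let $(a_n)_{n\ge1}$ be a complex sequence with $a_1\ne0$ and $\sum_n|a_n|n^{\epsilon}<\infty$ for some $\epsilon>0$, and suppose its convolution inverse $(b_n)$ satisfies $\sum_n|b_n|/\sqrt n<\infty$. Assume moreover that there are constants $C_0,C_1,N$ such that $$\left|\frac{L(1/2-y+ix;a_n)}{L(1/2+y+ix;a_n)}\right|\le C_0+C_1|x|^N$$ for all $x,y\in\mathbb R$ with $|y|\le1/2+\epsilon/2$. Then for every $f\in\mathcal S_0$, $\mathcal F(a_n)f\in\mathrm{Dom}(B)$ and $\mathcal F(a_n)Bf+B\mathcal F(a_n)f=0$.
   Context: $T(a_n)f(x)=\sum_{n\ge1}a_nf(nx)$ ($x>0$), extended to a bounded operator on $L^2[0,\infty)$ when $\sum|a_n|/\sqrt n<\infty$. The convolution inverse of $(a_n)$ is the unique $(b_n)$ with $\sum_{mn=k}a_mb_n=1$ for $k=1$ and $0$ for $k>1$. $Sf(x)=\frac1xf(1/x)$. $\mathcal F(a_n)=T(\overline{b_n})ST(a_n)$. $L(s;a_n)=\sum_{n\ge1}a_nn^{-s}$. $B$ is the unbounded operator on $L^2[0,\infty)$ given by $Bf(x)=i\,(xf'(x)+f(x)/2)$ with domain $\mathrm{Dom}(B)=\{f\in C^\infty(0,\infty)\cap L^2: xf'+f/2\in L^2\}$. $\mathcal S_0=\{f\in C^\infty(0,\infty):\sup_{x>0}x^n|f^{(k)}(x)|<\infty\text{ for all }k\ge0,\ n\in\mathbb Z\}$. *)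

(* Defs.v *)
From Stdlib Require Import Reals ZArith Arith.
Open Scope R_scope.

Record Cplx := mkC { Cre : R; Cim : R }.
Definition Czero : Cplx := mkC 0 0.
Definition Cone : Cplx := mkC 1 0.
Definition Ci : Cplx := mkC 0 1.
Definition Cadd (z w : Cplx) : Cplx := mkC (Cre z + Cre w) (Cim z + Cim w).
Definition Copp (z : Cplx) : Cplx := mkC (- Cre z) (- Cim z).
Definition Csub (z w : Cplx) : Cplx := Cadd z (Copp w).
Definition Cmul (z w : Cplx) : Cplx :=
  mkC (Cre z * Cre w - Cim z * Cim w) (Cre z * Cim w + Cim z * Cre w).
Definition Cscal (r : R) (z : Cplx) : Cplx := mkC (r * Cre z) (r * Cim z).
Definition Cconj (z : Cplx) : Cplx := mkC (Cre z) (- Cim z).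
Definition Cnorm (z : Cplx) : R := sqrt (Cre z ^ 2 + Cim z ^ 2).
Definition Cinv (z : Cplx) : Cplx :=
  mkC (Cre z / (Cre z ^ 2 + Cim z ^ 2)) (- Cim z / (Cre z ^ 2 + Cim z ^ 2)).
Definition Cdiv (z w : Cplx) : Cplx := Cmul z (Cinv w).
Definition Cexp (z : Cplx) : Cplx := mkC (exp (Cre z) * cos (Cim z)) (exp (Cre z) * sin (Cim z)).

(* n^{-s} = exp(-s log n), for n >= 1 *)
Definition npow_neg (n : nat) (s : Cplx) : Cplx := Cexp (Cscal (- ln (INR n)) s).

Fixpoint Csum_to (u : nat -> Cplx) (N : nat) : Cplx :=
  match N with
  | O => Czero
  | S N' => Cadd (Csum_to u N') (u N)
  end.

Definition Cseries_lim (u : nat -> Cplx) (l : Cplx) : Prop :=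
  forall e, 0 < e -> exists N0, forall N, (N0 <= N)%nat -> Cnorm (Csub (Csum_to u N) l) < e.

(* sum_{n>=1} u n < infinity, for a sequence of nonnegative reals u *)
Definition abs_summable (u : nat -> R) : Prop :=
  exists M, forall N, sum_f_R0 (fun k => u (S k)) N <= M.

(* Dirichlet convolution (a*b)_k = sum_{mn=k} a_m b_n, k >= 1 *)
Definition dirichlet_conv (a b : nat -> Cplx) (k : nat) : Cplx :=
  Csum_to (fun d => if Nat.eqb (Nat.modulo k d) 0 then Cmul (a d) (b (Nat.div k d)) else Czero) k.

Definition is_conv_inverse (a b : nat -> Cplx) : Prop :=
  forall k, (1 <= k)%nat -> dirichlet_conv a b k = (if Nat.eqb k 1 then Cone else Czero).

Definition LS (a : nat -> Cplx) (s : Cplx) (l : Cplx) : Prop :=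
  Cseries_lim (fun n => Cmul (a n) (npow_neg n s)) l.

Definition is_derivs (f : R -> Cplx) (D : nat -> R -> Cplx) : Prop :=
  (forall x, 0 < x -> D O x = f x) /\
  (forall k x, 0 < x ->
     derivable_pt_lim (fun t => Cre (D k t)) x (Cre (D (S k) x)) /\
     derivable_pt_lim (fun t => Cim (D k t)) x (Cim (D (S k) x))).

Definition in_S0 (f : R -> Cplx) (D : nat -> R -> Cplx) : Prop :=
  is_derivs f D /\
  forall (k : nat) (n : Z), exists M, forall x, 0 < x -> powerRZ x n * Cnorm (D k x) <= M.

(* int_0^oo |h|^2 <= M, as an improper Riemann integral *)
Definition L2norm2_le (h : R -> Cplx) (M : R) : Prop :=
  forall lo hi, 0 < lo -> lo <= hi ->
    exists pr : Riemann_integrable (fun x => Cnorm (h x) ^ 2) lo hi, RiemannInt pr <= M.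

Definition inL2 (h : R -> Cplx) : Prop := exists M, L2norm2_le h M.

Definition L2conv (hN : nat -> R -> Cplx) (h : R -> Cplx) : Prop :=
  forall e, 0 < e -> exists N0, forall N, (N0 <= N)%nat ->
    L2norm2_le (fun x => Csub (hN N x) (h x)) e.

(* partial sums of T(c)h(x) = sum_{n>=1} c_n h(nx) *)
Definition Tpart (c : nat -> Cplx) (h : R -> Cplx) (M : nat) (x : R) : Cplx :=
  Csum_to (fun n => Cmul (c n) (h (INR n * x))) M.

Definition T_pointwise (c : nat -> Cplx) (h g : R -> Cplx) : Prop :=
  forall x, 0 < x -> Cseries_lim (fun n => Cmul (c n) (h (INR n * x))) (g x).

Definition opS (h : R -> Cplx) (x : R) : Cplx := Cscal (/ x) (h (/ x)).

Definition opB (f : R -> Cplx) (D : nat -> R -> Cplx) (x : R) : Cplx :=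
  Cmul Ci (Cadd (Cscal x (D 1%nat x)) (Cscal (/ 2) (f x))).

Definition conj_seq (b : nat -> Cplx) (n : nat) : Cplx := Cconj (b n).

(* F(a_n) f = T(conj b) S T(a) f equals v in L^2 (T(conj b) being the bounded
   L^2 operator, given by the L^2-convergent series of its partial sums) *)
Definition is_F_image (a b : nat -> Cplx) (f v : R -> Cplx) : Prop :=
  exists g, T_pointwise a f g /\ L2conv (Tpart (conj_seq b) (opS g)) v.

(* Main.v *)
Require Import Defs.
From Stdlib Require Import Reals ZArith Arith Lra Lia Psatz.
Open Scope R_scope.

Lemma Cext z w : Cre z = Cre w -> Cim z = Cim w -> z = w.
Proof. destruct z, w; simpl; intros; subst; reflexivity. Qed.

Lemma Cnorm_nonneg z : 0 <= Cnorm z.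
Proof. apply sqrt_pos. Qed.

Lemma Cnorm_sq z : Cnorm z ^ 2 = Cre z ^ 2 + Cim z ^ 2.
Proof. unfold Cnorm; rewrite pow2_sqrt; nra. Qed.

Lemma Cnorm_le_sq z a : 0 <= a -> Cre z ^ 2 + Cim z ^ 2 <= a ^ 2 -> Cnorm z <= a.
Proof. intros Ha H. unfold Cnorm. rewrite <- (sqrt_pow2 a Ha). apply sqrt_le_1_alt; auto. Qed.

Lemma Cnorm_mul z w : Cnorm (Cmul z w) = Cnorm z * Cnorm w.
Proof.
  unfold Cnorm, Cmul; simpl. rewrite <- sqrt_mult by nra. f_equal. ring.
Qed.

Lemma Cnorm_scal r z : Cnorm (Cscal r z) = Rabs r * Cnorm z.
Proof.
  unfold Cnorm, Cscal; simpl. rewrite <- sqrt_Rsqr_abs. rewrite <- sqrt_mult by (unfold Rsqr; nra).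
  f_equal. unfold Rsqr; ring.
Qed.

Lemma Re_le z : Rabs (Cre z) <= Cnorm z.
Proof. unfold Cnorm. rewrite <- sqrt_Rsqr_abs. apply sqrt_le_1_alt. unfold Rsqr; nra. Qed.
Lemma Im_le z : Rabs (Cim z) <= Cnorm z.
Proof. unfold Cnorm. rewrite <- sqrt_Rsqr_abs. apply sqrt_le_1_alt. unfold Rsqr; nra. Qed.

Lemma Cnorm_tri z w : Cnorm (Cadd z w) <= Cnorm z + Cnorm w.
Proof.
  apply Cnorm_le_sq. pose proof (Cnorm_nonneg z); pose proof (Cnorm_nonneg w); lra.
  unfold Cadd; simpl.
  assert (Hcs : Cre z * Cre w + Cim z * Cim w <= Cnorm z * Cnorm w).
  { unfold Cnorm. rewrite <- sqrt_mult by nra.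
    apply Rle_trans with (Rabs (Cre z * Cre w + Cim z * Cim w)). apply Rle_abs.
    rewrite <- sqrt_Rsqr_abs. apply sqrt_le_1_alt. unfold Rsqr.
    pose proof (pow2_ge_0 (Cre z * Cim w - Cim z * Cre w)); nra. }
  pose proof (Cnorm_sq z); pose proof (Cnorm_sq w). nra.
Qed.

Lemma Cnorm_opp z : Cnorm (Copp z) = Cnorm z.
Proof. unfold Cnorm, Copp; simpl. f_equal. ring. Qed.

Lemma Cnorm_conj z : Cnorm (Cconj z) = Cnorm z.
Proof. unfold Cnorm, Cconj; simpl. f_equal. ring. Qed.

Lemma Cnorm_sub_tri z w : Cnorm (Csub z w) <= Cnorm z + Cnorm w.
Proof. unfold Csub. rewrite <- (Cnorm_opp w). apply Cnorm_tri. Qed.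

Lemma Cnorm_sub_sym z w : Cnorm (Csub z w) = Cnorm (Csub w z).
Proof. unfold Cnorm, Csub, Cadd, Copp; simpl. f_equal. ring. Qed.

Lemma Cnorm_le_ReIm z : Cnorm z <= Rabs (Cre z) + Rabs (Cim z).
Proof.
  apply Cnorm_le_sq. pose proof (Rabs_pos (Cre z)); pose proof (Rabs_pos (Cim z)); lra.
  pose proof (Rabs_pos (Cre z)); pose proof (Rabs_pos (Cim z)).
  rewrite <- (pow2_abs (Cre z)), <- (pow2_abs (Cim z)). nra.
Qed.

Lemma Cnorm_zero : Cnorm Czero = 0.
Proof. assert (H: Cre Czero ^2 + Cim Czero ^2 = 0) by (simpl; ring). unfold Cnorm; rewrite H; apply sqrt_0. Qed.

Lemma Csub_tri3 x y z : Cnorm (Csub x z) <= Cnorm (Csub x y) + Cnorm (Csub y z).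
Proof.
  replace (Csub x z) with (Cadd (Csub x y) (Csub y z)). apply Cnorm_tri.
  apply Cext; unfold Csub, Cadd, Copp; simpl; ring.
Qed.

Lemma Cnorm_Ci z : Cnorm (Cmul Ci z) = Cnorm z.
Proof. rewrite Cnorm_mul. assert (H: Cre Ci ^2 + Cim Ci ^2 = 1) by (simpl; ring). unfold Cnorm at 1; rewrite H, sqrt_1; ring. Qed.

From Stdlib Require Import Reals ZArith Arith Lra Lia Psatz.
Open Scope R_scope.

Fixpoint Rsum_to (u : nat -> R) (N : nat) : R :=
  match N with O => 0 | S N' => Rsum_to u N' + u N end.

Definition bsum (w : nat -> R) := exists W, forall N, Rsum_to w N <= W.
Definition nonneg1 (w : nat -> R) := forall n, (1 <= n)%nat -> 0 <= w n.

Lemma Rsum_to_sum_f u N : Rsum_to u (S N) = sum_f_R0 (fun k => u (S k)) N.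
Proof. induction N. simpl; ring. change (Rsum_to u (S (S N))) with (Rsum_to u (S N) + u (S (S N))).
  rewrite IHN. simpl. ring. Qed.

Lemma abs_summable_bsum u : nonneg1 u -> abs_summable u -> bsum u.
Proof.
  intros Hn [M HM]. exists (Rmax 0 M). intros [|N]. simpl. apply Rmax_l.
  rewrite Rsum_to_sum_f. eapply Rle_trans. apply HM. apply Rmax_r.
Qed.

Lemma Rsum_mono w N k : nonneg1 w -> Rsum_to w N <= Rsum_to w (N + k).
Proof. intro Hw. induction k. rewrite Nat.add_0_r; lra.
  rewrite Nat.add_succ_r. simpl. pose proof (Hw (S (N+k)) ltac:(lia)). lra. Qed.

Lemma Rsum_mono' w N P : nonneg1 w -> (N <= P)%nat -> Rsum_to w N <= Rsum_to w P.
Proof. intros Hw HP. replace P with (N + (P - N))%nat by lia. apply Rsum_mono; auto. Qed.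

Lemma Rsum_nonneg w N : nonneg1 w -> 0 <= Rsum_to w N.
Proof. intros Hw. pose proof (Rsum_mono w 0 N Hw). simpl in H. exact H. Qed.

Lemma bsum_cv w : nonneg1 w -> bsum w -> exists Wl, Un_cv (Rsum_to w) Wl.
Proof.
  intros Hw [W HW]. destruct (growing_cv (Rsum_to w)) as [l Hl].
  intro n. simpl. pose proof (Hw (S n) ltac:(lia)). lra.
  exists W. intros x [n ->]. apply HW. exists l; exact Hl.
Qed.

Lemma cv_upper w Wl N : nonneg1 w -> Un_cv (Rsum_to w) Wl -> Rsum_to w N <= Wl.
Proof.
  intros Hw Hl. apply Rnot_lt_le; intro Hc.
  destruct (Hl (Rsum_to w N - Wl)) as [N0 HN0]. lra.
  specialize (HN0 (max N N0) ltac:(lia)). unfold R_dist in HN0.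
  pose proof (Rsum_mono' w N (max N N0) Hw ltac:(lia)).
  rewrite Rabs_right in HN0; lra.
Qed.

Lemma Csum_to_norm u N : Cnorm (Csum_to u N) <= Rsum_to (fun n => Cnorm (u n)) N.
Proof. induction N. simpl. rewrite Cnorm_zero; lra. simpl.
  eapply Rle_trans. apply Cnorm_tri. lra. Qed.

Lemma Csum_seg u w N k : (forall n, (1 <= n)%nat -> Cnorm (u n) <= w n) ->
  Cnorm (Csub (Csum_to u (N + k)) (Csum_to u N)) <= Rsum_to w (N + k) - Rsum_to w N.
Proof.
  intros Hu. induction k.
  - rewrite Nat.add_0_r. replace (Csub (Csum_to u N) (Csum_to u N)) with Czero.
    rewrite Cnorm_zero; lra. apply Cext; unfold Csub, Cadd, Copp; simpl; ring.
  - rewrite Nat.add_succ_r. simpl.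
    replace (Csub (Cadd (Csum_to u (N + k)) (u (S (N + k)))) (Csum_to u N))
      with (Cadd (Csub (Csum_to u (N + k)) (Csum_to u N)) (u (S (N+k)))).
    eapply Rle_trans. apply Cnorm_tri. pose proof (Hu (S (N+k)) ltac:(lia)). lra.
    apply Cext; unfold Csub, Cadd, Copp; simpl; ring.
Qed.

Lemma Csum_seg' u w N P : (forall n, (1 <= n)%nat -> Cnorm (u n) <= w n) -> (N <= P)%nat ->
  Cnorm (Csub (Csum_to u P) (Csum_to u N)) <= Rsum_to w P - Rsum_to w N.
Proof. intros Hu HP. replace P with (N + (P - N))%nat by lia. apply Csum_seg; auto. Qed.

Lemma Csum_cauchy u w n m : (forall n, (1 <= n)%nat -> Cnorm (u n) <= w n) ->
  Cnorm (Csub (Csum_to u n) (Csum_to u m)) <= Rabs (Rsum_to w n - Rsum_to w m).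
Proof.
  intros Hu. destruct (le_lt_dec m n).
  - eapply Rle_trans. apply Csum_seg'; eauto. apply Rle_abs.
  - rewrite Cnorm_sub_sym. eapply Rle_trans. apply (Csum_seg' u w n m); auto; lia.
    rewrite Rabs_minus_sym. apply Rle_abs.
Qed.

Lemma dom_series u w : (forall n, (1 <= n)%nat -> Cnorm (u n) <= w n) -> nonneg1 w -> bsum w ->
  exists l, Cseries_lim u l.
Proof.
  intros Hu Hw Hb. destruct (bsum_cv w Hw Hb) as [Wl HWl].
  assert (HC : Cauchy_crit (Rsum_to w)). { apply CV_Cauchy. exists Wl; exact HWl. }
  assert (Hre : Cauchy_crit (fun n => Cre (Csum_to u n))).
  { intros e He. destruct (HC e He) as [N HN]. exists N. intros n m Hn Hm.
    specialize (HN n m Hn Hm). unfold R_dist in *.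
    eapply Rle_lt_trans; [|exact HN]. eapply Rle_trans; [|apply (Csum_cauchy u w n m Hu)].
    eapply Rle_trans; [|apply Re_le]. right. simpl. unfold Rminus. reflexivity. }
  assert (Him : Cauchy_crit (fun n => Cim (Csum_to u n))).
  { intros e He. destruct (HC e He) as [N HN]. exists N. intros n m Hn Hm.
    specialize (HN n m Hn Hm). unfold R_dist in *.
    eapply Rle_lt_trans; [|exact HN]. eapply Rle_trans; [|apply (Csum_cauchy u w n m Hu)].
    eapply Rle_trans; [|apply Im_le]. right. simpl. unfold Rminus. reflexivity. }
  destruct (R_complete _ Hre) as [lr Hlr]. destruct (R_complete _ Him) as [li Hli].
  exists (mkC lr li). intros e He.
  destruct (Hlr (e/2)) as [N1 HN1]. lra. destruct (Hli (e/2)) as [N2 HN2]. lra.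
  exists (max N1 N2). intros N HN.
  specialize (HN1 N ltac:(lia)). specialize (HN2 N ltac:(lia)). unfold R_dist in *.
  eapply Rle_lt_trans. apply Cnorm_le_ReIm. simpl. unfold Rminus in *. lra.
Qed.

Lemma series_tail u w l Wl : (forall n, (1 <= n)%nat -> Cnorm (u n) <= w n) -> nonneg1 w ->
  Cseries_lim u l -> Un_cv (Rsum_to w) Wl ->
  forall N, Cnorm (Csub l (Csum_to u N)) <= Wl - Rsum_to w N.
Proof.
  intros Hu Hw Hl HW N. apply Rnot_lt_le; intro Hc.
  set (d := Cnorm (Csub l (Csum_to u N)) - (Wl - Rsum_to w N)).
  destruct (Hl d) as [N0 HN0]. unfold d; lra.
  specialize (HN0 (max N N0) ltac:(lia)).
  pose proof (Csum_seg' u w N (max N N0) Hu ltac:(lia)).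
  pose proof (cv_upper w Wl (max N N0) Hw HW).
  pose proof (Csub_tri3 l (Csum_to u (max N N0)) (Csum_to u N)).
  rewrite Cnorm_sub_sym in HN0. unfold d in *. lra.
Qed.

Lemma series_bound u v l M : Cseries_lim u l -> (forall n, (1 <= n)%nat -> Cnorm (u n) <= v n) ->
  (forall N, Rsum_to v N <= M) -> Cnorm l <= M.
Proof.
  intros Hl Hu HM. apply Rnot_lt_le; intro Hc.
  destruct (Hl (Cnorm l - M)) as [N0 HN0]. lra.
  specialize (HN0 N0 (le_n _)).
  pose proof (Csum_to_norm u N0).
  assert (Rsum_to (fun n => Cnorm (u n)) N0 <= Rsum_to v N0).
  { clear -Hu. induction N0. simpl; lra. simpl. pose proof (Hu (S N0) ltac:(lia)). lra. }
  pose proof (HM N0).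
  pose proof (Csub_tri3 l (Csum_to u N0) Czero).
  replace (Csub l Czero) with l in H2 by (apply Cext; unfold Csub,Cadd,Copp; simpl; ring).
  replace (Csub (Csum_to u N0) Czero) with (Csum_to u N0) in H2 by (apply Cext; unfold Csub,Cadd,Copp; simpl; ring).
  rewrite Cnorm_sub_sym in HN0. lra.
Qed.

Lemma series_unique u l1 l2 : Cseries_lim u l1 -> Cseries_lim u l2 -> l1 = l2.
Proof.
  intros H1 H2.
  assert (Cnorm (Csub l1 l2) = 0).
  { apply Rle_antisym; [|apply Cnorm_nonneg]. apply Rnot_lt_le; intro Hc.
    destruct (H1 (Cnorm (Csub l1 l2) / 2)) as [N1 HN1]. lra.
    destruct (H2 (Cnorm (Csub l1 l2) / 2)) as [N2 HN2]. lra.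
    specialize (HN1 (max N1 N2) ltac:(lia)). specialize (HN2 (max N1 N2) ltac:(lia)).
    pose proof (Csub_tri3 l1 (Csum_to u (max N1 N2)) l2). rewrite Cnorm_sub_sym in HN1. lra. }
  pose proof (Re_le (Csub l1 l2)). pose proof (Im_le (Csub l1 l2)). rewrite H in *.
  apply Cext. simpl in H0.
  pose proof (Rle_abs (Cre l1 + - Cre l2)); pose proof (Rle_abs (- (Cre l1 + - Cre l2))); rewrite Rabs_Ropp in *. pose proof (Rabs_pos (Cre l1 + - Cre l2)). lra.
  simpl in H3.
  pose proof (Rle_abs (Cim l1 + - Cim l2)); pose proof (Rle_abs (- (Cim l1 + - Cim l2))); rewrite Rabs_Ropp in *. pose proof (Rabs_pos (Cim l1 + - Cim l2)). lra.
Qed.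

Lemma Csum_ext u v N : (forall n, (1 <= n)%nat -> u n = v n) -> Csum_to u N = Csum_to v N.
Proof. intros H. induction N. reflexivity. simpl. rewrite IHN, H by lia. reflexivity. Qed.

Lemma series_ext u v l : (forall n, (1 <= n)%nat -> u n = v n) -> Cseries_lim u l -> Cseries_lim v l.
Proof. intros H Hl e He. destruct (Hl e He) as [N0 HN]. exists N0. intros N HN'.
  rewrite <- (Csum_ext u v N H). auto. Qed.

Lemma series_add u v l m : Cseries_lim u l -> Cseries_lim v m ->
  Cseries_lim (fun n => Cadd (u n) (v n)) (Cadd l m).
Proof.
  intros Hu Hv e He. destruct (Hu (e/2)) as [N1 H1]. lra. destruct (Hv (e/2)) as [N2 H2]. lra.
  exists (max N1 N2). intros N HN.
  assert (Csum_to (fun n => Cadd (u n) (v n)) N = Cadd (Csum_to u N) (Csum_to v N)).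
  { clear. induction N. apply Cext; simpl; ring. simpl. rewrite IHN. apply Cext; simpl; ring. }
  rewrite H. replace (Csub (Cadd (Csum_to u N) (Csum_to v N)) (Cadd l m))
    with (Cadd (Csub (Csum_to u N) l) (Csub (Csum_to v N) m)) by (apply Cext; unfold Csub,Cadd,Copp; simpl; ring).
  eapply Rle_lt_trans. apply Cnorm_tri. specialize (H1 N ltac:(lia)). specialize (H2 N ltac:(lia)). lra.
Qed.

Lemma series_cmul z u l : Cseries_lim u l -> Cseries_lim (fun n => Cmul z (u n)) (Cmul z l).
Proof.
  intros Hu e He. destruct (Hu (e / (Cnorm z + 1))) as [N1 H1].
  pose proof (Cnorm_nonneg z). apply Rdiv_lt_0_compat; lra.
  exists N1. intros N HN.
  assert (Csum_to (fun n => Cmul z (u n)) N = Cmul z (Csum_to u N)).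
  { clear. induction N. apply Cext; simpl; ring. simpl. rewrite IHN. apply Cext; simpl; ring. }
  rewrite H. replace (Csub (Cmul z (Csum_to u N)) (Cmul z l)) with (Cmul z (Csub (Csum_to u N) l))
    by (apply Cext; unfold Csub,Cadd,Copp,Cmul; simpl; ring).
  rewrite Cnorm_mul. specialize (H1 N HN). pose proof (Cnorm_nonneg z).
  pose proof (Cnorm_nonneg (Csub (Csum_to u N) l)).
  apply Rle_lt_trans with ((Cnorm z + 1) * Cnorm (Csub (Csum_to u N) l)). nra.
  apply Rmult_lt_reg_l with (/ (Cnorm z + 1)). apply Rinv_0_lt_compat; lra.
  rewrite <- Rmult_assoc, Rinv_l by lra. lra.
Qed.

Lemma series_scal r u l : Cseries_lim u l -> Cseries_lim (fun n => Cscal r (u n)) (Cscal r l).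
Proof.
  intros H. replace (Cscal r l) with (Cmul (mkC r 0) l) by (apply Cext; simpl; ring).
  eapply series_ext; [|apply (series_cmul (mkC r 0)); exact H].
  intros n _. apply Cext; simpl; ring.
Qed.

From Stdlib Require Import ClassicalEpsilon.

Lemma dpl_ext f g x l : (forall y, f y = g y) -> derivable_pt_lim f x l -> derivable_pt_lim g x l.
Proof. intros H Hf e He. destruct (Hf e He) as [d Hd]. exists d. intros h Hh Hh'.
  rewrite <- !H. auto. Qed.

Lemma dpl_val f x l l' : derivable_pt_lim f x l -> l = l' -> derivable_pt_lim f x l'.
Proof. intros H <-; exact H. Qed.

Lemma dpl_scale (g : R -> R) (lam x l : R) : derivable_pt_lim g (lam * x) l ->
  derivable_pt_lim (fun y => g (lam * y)) x (lam * l).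
Proof.
  intros H. assert (H1 : derivable_pt_lim (fun y => lam * y) x lam).
  { apply dpl_ext with (mult_real_fct lam id). intros; reflexivity.
    replace lam with (lam * 1) at 2 by ring. apply derivable_pt_lim_scal, derivable_pt_lim_id. }
  pose proof (derivable_pt_lim_comp _ _ x _ _ H1 H). rewrite Rmult_comm.
  apply dpl_ext with (comp g (fun y => lam * y)). intros; reflexivity. exact H0.
Qed.

Lemma dpl_lin2 (f g : R -> R) a b x lf lg : derivable_pt_lim f x lf -> derivable_pt_lim g x lg ->
  derivable_pt_lim (fun t => a * f t + b * g t) x (a*lf + b*lg).
Proof.
  intros Hf Hg. apply dpl_ext with (mult_real_fct a f + mult_real_fct b g)%F. intros; reflexivity.
  apply derivable_pt_lim_plus; apply derivable_pt_lim_scal; auto.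
Qed.

Definition Cderiv (h h' : R -> Cplx) (x : R) : Prop :=
  derivable_pt_lim (fun t => Cre (h t)) x (Cre (h' x)) /\
  derivable_pt_lim (fun t => Cim (h t)) x (Cim (h' x)).

Definition sterm (d : nat -> Cplx) (lam : nat -> R) (Psi : nat -> R -> Cplx) (k n : nat) (x : R) : Cplx :=
  Cmul (d n) (Cscal (lam n ^ k) (Psi k (lam n * x))).

Section Scale.
Variables (d : nat -> Cplx) (lam : nat -> R) (Psi : nat -> R -> Cplx).
Hypothesis Hlam : forall n, (1 <= n)%nat -> 0 < lam n.
Hypothesis HPsi : forall k x, 0 < x -> Cderiv (Psi k) (Psi (S k)) x.

Lemma sterm_deriv k n y : (1 <= n)%nat -> 0 < y ->
  Cderiv (sterm d lam Psi k n) (sterm d lam Psi (S k) n) y.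
Proof.
  intros Hn Hy. pose proof (Hlam n Hn) as Hl.
  destruct (HPsi k (lam n * y) ltac:(nra)) as [Hr Hi].
  apply dpl_scale in Hr. apply dpl_scale in Hi.
  split.
  - pose proof (dpl_lin2 _ _ (Cre (d n) * lam n ^ k) (- Cim (d n) * lam n ^ k) y _ _ Hr Hi).
    eapply dpl_ext; [| eapply dpl_val; [exact H | unfold sterm; simpl; ring]].
    intros t. unfold sterm; simpl. ring.
  - pose proof (dpl_lin2 _ _ (Cre (d n) * lam n ^ k) (Cim (d n) * lam n ^ k) y _ _ Hi Hr).
    eapply dpl_ext; [| eapply dpl_val; [exact H | unfold sterm; simpl; ring]].
    intros t. unfold sterm; simpl. ring.
Qed.

Lemma psum_deriv k N y : 0 < y ->
  Cderiv (fun t => Csum_to (fun n => sterm d lam Psi k n t) N)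
         (fun t => Csum_to (fun n => sterm d lam Psi (S k) n t) N) y.
Proof.
  intros Hy. induction N.
  - simpl. split; apply dpl_ext with (fct_cte 0); try (intros; reflexivity); apply derivable_pt_lim_const.
  - destruct IHN as [IR II]. destruct (sterm_deriv k (S N) y ltac:(lia) Hy) as [TR TI]. split.
    + apply dpl_ext with ((fun t => Cre (Csum_to (fun n => sterm d lam Psi k n t) N)) + (fun t => Cre (sterm d lam Psi k (S N) t)))%F.
      intros; reflexivity. apply derivable_pt_lim_plus; auto.
    + apply dpl_ext with ((fun t => Cim (Csum_to (fun n => sterm d lam Psi k n t) N)) + (fun t => Cim (sterm d lam Psi k (S N) t)))%F.
      intros; reflexivity. apply derivable_pt_lim_plus; auto.
Qed.

Lemma Rsum_scal C w N : Rsum_to (fun n => C * w n) N = C * Rsum_to w N.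
Proof. induction N; simpl; [ring|rewrite IHN; ring]. Qed.

Variable w : nat -> R.
Hypothesis Hw : nonneg1 w.
Hypothesis Hb : bsum w.
Hypothesis Hdom : forall k lo, 0 < lo -> exists C, 0 <= C /\
   forall n x, (1 <= n)%nat -> lo <= x -> Cnorm (sterm d lam Psi k n x) <= C * w n.

Lemma scale_smooth : exists V : nat -> R -> Cplx,
  (forall k x, 0 < x -> Cseries_lim (fun n => sterm d lam Psi k n x) (V k x)) /\ is_derivs (V O) V.
Proof.
  assert (Hex : forall kx : nat * R, exists l, 0 < snd kx -> Cseries_lim (fun n => sterm d lam Psi (fst kx) n (snd kx)) l).
  { intros [k x]; simpl. destruct (Rlt_dec 0 x) as [Hx|Hx].
    - destruct (Hdom k x Hx) as [C [HC HD]].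
      destruct (dom_series (fun n => sterm d lam Psi k n x) (fun n => C * w n)) as [l Hl].
      intros n Hn. apply HD; auto; lra. intros n Hn. pose proof (Hw n Hn); nra.
      destruct Hb as [W HW]. exists (C * W). intros N. rewrite Rsum_scal. pose proof (HW N). nra.
      exists l; auto.
    - exists Czero; intros; lra. }
  set (V := fun k x => proj1_sig (constructive_indefinite_description _ (Hex (k, x)))).
  assert (HV : forall k x, 0 < x -> Cseries_lim (fun n => sterm d lam Psi k n x) (V k x)).
  { intros k x Hx. unfold V. destruct (constructive_indefinite_description _ (Hex (k, x))) as [l Hl]. simpl. apply Hl. exact Hx. }
  exists V. split; auto. split; [intros; reflexivity|].
  intros k x0 Hx0.
  destruct (bsum_cv w Hw Hb) as [Wl HWl].
  set (r := mkposreal (x0/2) ltac:(lra)).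
  assert (Hball : forall y, Boule x0 r y -> x0/2 <= y).
  { intros y Hy. unfold Boule in Hy; simpl in Hy. apply Rabs_def2 in Hy. lra. }
  destruct (Hdom (S k) (x0/2) ltac:(lra)) as [C [HC HD]].
  assert (Htail : forall n y, Boule x0 r y ->
     Cnorm (Csub (V (S k) y) (Csum_to (fun m => sterm d lam Psi (S k) m y) n)) <= C * Wl - C * Rsum_to w n).
  { intros n y Hy. rewrite <- Rsum_scal. apply (series_tail _ (fun m => C * w m)).
    intros m Hm. apply HD; auto. intros m Hm. pose proof (Hw m Hm); nra.
    apply HV. pose proof (Hball y Hy); lra.
    intros e He. destruct (HWl (e / (C+1))) as [N HN]. apply Rdiv_lt_0_compat; lra.
    exists N. intros n' Hn'. specialize (HN n' Hn'). unfold R_dist in *. rewrite Rsum_scal.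
    replace (C * Rsum_to w n' - C * Wl) with (C * (Rsum_to w n' - Wl)) by ring.
    rewrite Rabs_mult, (Rabs_right C) by lra.
    apply Rle_lt_trans with ((C+1) * Rabs (Rsum_to w n' - Wl)). pose proof (Rabs_pos (Rsum_to w n' - Wl)); nra.
    apply Rmult_lt_reg_l with (/ (C+1)). apply Rinv_0_lt_compat; lra.
    rewrite <- Rmult_assoc, Rinv_l by lra. lra. }
  assert (Hunif : forall e, 0 < e -> exists N, forall n y, (N <= n)%nat -> Boule x0 r y ->
     Cnorm (Csub (V (S k) y) (Csum_to (fun m => sterm d lam Psi (S k) m y) n)) < e).
  { intros e He. destruct (HWl (e / (C+1))) as [N HN]. apply Rdiv_lt_0_compat; lra.
    exists N. intros n y Hn Hy. eapply Rle_lt_trans. apply Htail; auto.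
    specialize (HN n Hn). unfold R_dist in HN. rewrite Rabs_minus_sym in HN.
    pose proof (cv_upper w Wl n Hw HWl). rewrite Rabs_right in HN by lra.
    replace (C * Wl - C * Rsum_to w n) with (C * (Wl - Rsum_to w n)) by ring.
    apply Rle_lt_trans with ((C+1) * (Wl - Rsum_to w n)). nra.
    apply Rmult_lt_reg_l with (/ (C+1)). apply Rinv_0_lt_compat; lra.
    rewrite <- Rmult_assoc, Rinv_l by lra. lra. }
  assert (Hx0b : Boule x0 r x0). { unfold Boule; simpl. rewrite Rminus_diag, Rabs_R0. lra. }
  split.
  - apply (CVU_derivable (fun n t => Cre (Csum_to (fun m => sterm d lam Psi k m t) n))
                         (fun n t => Cre (Csum_to (fun m => sterm d lam Psi (S k) m t) n))
                         (fun t => Cre (V k t)) (fun t => Cre (V (S k) t)) x0 r); auto.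
    + intros e He. destruct (Hunif e He) as [N HN]. exists N. intros n y Hn Hy.
      eapply Rle_lt_trans; [|apply (HN n y Hn Hy)]. eapply Rle_trans; [|apply Re_le].
      right. simpl. unfold Rminus. reflexivity.
    + intros y Hy e He. pose proof (Hball y Hy). destruct (HV k y ltac:(lra) e He) as [N HN].
      exists N. intros n Hn. unfold R_dist. eapply Rle_lt_trans; [|apply (HN n Hn)].
      eapply Rle_trans; [|apply Re_le]. right. simpl. unfold Rminus. reflexivity.
    + intros n y Hy. pose proof (Hball y Hy). apply (psum_deriv k n y). lra.
  - apply (CVU_derivable (fun n t => Cim (Csum_to (fun m => sterm d lam Psi k m t) n))
                         (fun n t => Cim (Csum_to (fun m => sterm d lam Psi (S k) m t) n))
                         (fun t => Cim (V k t)) (fun t => Cim (V (S k) t)) x0 r); auto.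
    + intros e He. destruct (Hunif e He) as [N HN]. exists N. intros n y Hn Hy.
      eapply Rle_lt_trans; [|apply (HN n y Hn Hy)]. eapply Rle_trans; [|apply Im_le].
      right. simpl. unfold Rminus. reflexivity.
    + intros y Hy e He. pose proof (Hball y Hy). destruct (HV k y ltac:(lra) e He) as [N HN].
      exists N. intros n Hn. unfold R_dist. eapply Rle_lt_trans; [|apply (HN n Hn)].
      eapply Rle_trans; [|apply Im_le]. right. simpl. unfold Rminus. reflexivity.
    + intros n y Hy. pose proof (Hball y Hy). apply (psum_deriv k n y). lra.
Qed.
End Scale.

From Stdlib Require Import List.
Open Scope list_scope.
Open Scope R_scope.

Definition ltm := (R * nat * nat)%type.
Definition ev_term (D : nat -> R -> Cplx) (t : ltm) (x : R) : Cplx :=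
  let '(c, j, i) := t in Cscal (c * (/ x) ^ j) (D i (/ x)).
Fixpoint ev_list (D : nat -> R -> Cplx) (L : list ltm) (x : R) : Cplx :=
  match L with nil => Czero | t :: L' => Cadd (ev_term D t x) (ev_list D L' x) end.
Definition dterm (t : ltm) : list ltm :=
  let '(c, j, i) := t in ((- c * INR j)%R, S j, i) :: ((- c)%R, S (S j), S i) :: nil.
Fixpoint dlist (L : list ltm) : list ltm :=
  match L with nil => nil | t :: L' => dterm t ++ dlist L' end.
Definition Sfam (D : nat -> R -> Cplx) (k : nat) : R -> Cplx :=
  ev_list D (Nat.iter k dlist ((1%R, 1%nat, 0%nat) :: nil)).

Lemma ev_list_app D L1 L2 x : ev_list D (L1 ++ L2) x = Cadd (ev_list D L1 x) (ev_list D L2 x).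
Proof. induction L1; simpl. apply Cext; simpl; ring. rewrite IHL1. apply Cext; simpl; ring. Qed.

Lemma dpl_inv x : 0 < x -> derivable_pt_lim (fun y => / y) x (- (/ x) ^ 2).
Proof.
  intros Hx. pose proof (derivable_pt_lim_div (fct_cte 1) id x 0 1 (derivable_pt_lim_const 1 x) (derivable_pt_lim_id x)).
  eapply dpl_ext; [|eapply dpl_val; [apply H; unfold id; lra|]].
  intros y; unfold div_fct, fct_cte, id. unfold Rdiv; ring.
  unfold fct_cte, id, Rsqr. field. lra.
Qed.

Lemma dpl_comp_inv g x l : 0 < x -> derivable_pt_lim g (/ x) l ->
  derivable_pt_lim (fun y => g (/ y)) x (l * (- (/ x) ^ 2)).
Proof.
  intros Hx H. pose proof (derivable_pt_lim_comp (fun y => / y) g x _ _ (dpl_inv x Hx) H).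
  eapply dpl_ext; [|exact H0]. intros; reflexivity.
Qed.

Lemma dpl_mult' f g x lf lg : derivable_pt_lim f x lf -> derivable_pt_lim g x lg ->
  derivable_pt_lim (fun t => f t * g t) x (lf * g x + f x * lg).
Proof. intros. eapply dpl_ext; [|apply derivable_pt_lim_mult; eauto]. intros; reflexivity. Qed.

Lemma dpl_scal' f a x l : derivable_pt_lim f x l -> derivable_pt_lim (fun t => a * f t) x (a * l).
Proof. intros. eapply dpl_ext; [|apply derivable_pt_lim_scal; eauto]. intros; reflexivity. Qed.

Section SF.
Variable D : nat -> R -> Cplx.
Hypothesis HD : forall i y, 0 < y -> Cderiv (D i) (D (S i)) y.

Lemma ev_term_deriv t x : 0 < x -> Cderiv (ev_term D t) (ev_list D (dterm t)) x.
Proof.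
  intros Hx. destruct t as [[c j] i].
  assert (Hix : 0 < / x) by (apply Rinv_0_lt_compat; auto).
  assert (Hp : derivable_pt_lim (fun y => (/ y) ^ j) x (INR j * (/ x) ^ Nat.pred j * (- (/ x) ^ 2))).
  { apply (dpl_comp_inv (fun z => z ^ j)); auto. apply derivable_pt_lim_pow. }
  destruct (HD i (/ x) Hix) as [Hr Hi].
  apply (dpl_comp_inv _ x _ Hx) in Hr. apply (dpl_comp_inv _ x _ Hx) in Hi.
  split.
  - pose proof (dpl_scal' _ c x _ (dpl_mult' _ _ x _ _ Hp Hr)).
    eapply dpl_ext; [|eapply dpl_val; [exact H|]].
    intros y; simpl; ring.
    simpl. destruct j; simpl; ring.
  - pose proof (dpl_scal' _ c x _ (dpl_mult' _ _ x _ _ Hp Hi)).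
    eapply dpl_ext; [|eapply dpl_val; [exact H|]].
    intros y; simpl; ring.
    simpl. destruct j; simpl; ring.
Qed.

Lemma Cderiv_add f f' g g' x : Cderiv f f' x -> Cderiv g g' x ->
  Cderiv (fun t => Cadd (f t) (g t)) (fun t => Cadd (f' t) (g' t)) x.
Proof.
  intros [A B] [C E]. split.
  - apply dpl_ext with ((fun t => Cre (f t)) + (fun t => Cre (g t)))%F. intros; reflexivity.
    apply derivable_pt_lim_plus; auto.
  - apply dpl_ext with ((fun t => Cim (f t)) + (fun t => Cim (g t)))%F. intros; reflexivity.
    apply derivable_pt_lim_plus; auto.
Qed.

Lemma Cderiv_ext f f' g g' x : (forall y, f y = g y) -> f' x = g' x -> Cderiv f f' x -> Cderiv g g' x.
Proof. intros H1 H2 [A B]. split.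
  - apply dpl_ext with (fun t => Cre (f t)). intros y; rewrite H1; reflexivity. rewrite <- H2; auto.
  - apply dpl_ext with (fun t => Cim (f t)). intros y; rewrite H1; reflexivity. rewrite <- H2; auto.
Qed.

Lemma ev_list_deriv L x : 0 < x -> Cderiv (ev_list D L) (ev_list D (dlist L)) x.
Proof.
  intros Hx. induction L as [|t L IH].
  - simpl. split; apply dpl_ext with (fct_cte 0); try (intros; reflexivity); apply derivable_pt_lim_const.
  - apply (Cderiv_ext (fun y => Cadd (ev_term D t y) (ev_list D L y)) (fun y => Cadd (ev_list D (dterm t) y) (ev_list D (dlist L) y))).
    intros y; reflexivity. change (dlist (t :: L)) with (dterm t ++ dlist L). rewrite ev_list_app; reflexivity.
    apply (Cderiv_add (ev_term D t) (ev_list D (dterm t)) (ev_list D L) (ev_list D (dlist L))); auto.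
    apply ev_term_deriv; auto.
Qed.

Lemma Sfam_deriv k x : 0 < x -> Cderiv (Sfam D k) (Sfam D (S k)) x.
Proof. intros Hx. unfold Sfam. simpl Nat.iter. apply ev_list_deriv; auto. Qed.
End SF.

Definition S0bound (D : nat -> R -> Cplx) : Prop :=
  forall (k : nat) (n : Z), exists M, forall x, 0 < x -> powerRZ x n * Cnorm (D k x) <= M.

Lemma powerRZ_inv_pow x n j : 0 < x -> powerRZ x n * (/ x) ^ j = powerRZ (/ x) (Z.of_nat j - n).
Proof.
  intros Hx. unfold Z.sub. rewrite powerRZ_add by (apply Rinv_neq_0_compat; lra).
  rewrite <- pow_powerRZ, powerRZ_neg', powerRZ_inv', Rinv_inv. ring.
Qed.

Lemma ev_list_bound D (HB : S0bound D) L n :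
  exists M, forall x, 0 < x -> powerRZ x n * Cnorm (ev_list D L x) <= M.
Proof.
  induction L as [|[[c j] i] L IH].
  - exists 0. intros x Hx. simpl. rewrite Cnorm_zero. lra.
  - destruct IH as [M1 HM1]. destruct (HB i (Z.of_nat j - n)%Z) as [M2 HM2].
    exists (Rabs c * M2 + M1). intros x Hx. change (ev_list D ((c,j,i)::L) x) with (Cadd (ev_term D (c,j,i) x) (ev_list D L x)).
    pose proof (powerRZ_lt x n Hx). pose proof (Cnorm_tri (ev_term D (c, j, i) x) (ev_list D L x)).
    specialize (HM1 x Hx).
    assert (powerRZ x n * Cnorm (ev_term D (c, j, i) x) <= Rabs c * M2).
    { simpl. rewrite Cnorm_scal, Rabs_mult. rewrite (Rabs_right ((/x)^j)).
      2: { apply Rle_ge, pow_le. left; apply Rinv_0_lt_compat; lra. }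
      replace (powerRZ x n * (Rabs c * (/ x) ^ j * Cnorm (D i (/ x))))
        with (Rabs c * ((powerRZ x n * (/ x) ^ j) * Cnorm (D i (/ x)))) by ring.
      rewrite powerRZ_inv_pow by lra. apply Rmult_le_compat_l. apply Rabs_pos.
      apply HM2. apply Rinv_0_lt_compat; lra. }
    apply Rle_trans with (powerRZ x n * (Cnorm (ev_term D (c, j, i) x) + Cnorm (ev_list D L x))).
    apply Rmult_le_compat_l; lra. lra.
Qed.

Lemma Sfam_S0 f D : in_S0 f D -> in_S0 (Sfam D 0) (Sfam D).
Proof.
  intros [[H0 H1] HB]. split. split. intros; reflexivity.
  intros k x Hx. apply (Sfam_deriv D (fun i y Hy => H1 i y Hy)); auto.
  intros k n. apply ev_list_bound. exact HB.
Qed.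

Lemma Sfam0 f D x : in_S0 f D -> 0 < x -> Sfam D 0 x = opS f x.
Proof. intros [[H0 _] _] Hx. unfold Sfam, opS. simpl. rewrite H0 by (apply Rinv_0_lt_compat; auto).
  apply Cext; simpl; ring. Qed.

Definition Bfam (D : nat -> R -> Cplx) (k : nat) (x : R) : Cplx :=
  Cmul Ci (Cadd (Cscal x (D (S k) x)) (Cscal (INR k + / 2) (D k x))).

Lemma Bfam_S0 f D : in_S0 f D -> in_S0 (opB f D) (Bfam D).
Proof.
  intros [[H0 H1] HB]. split. split.
  - intros x Hx. unfold Bfam, opB. rewrite H0 by auto. f_equal. f_equal. f_equal. simpl; ring.
  - intros k x Hx. destruct (H1 k x Hx) as [Ar Ai]. destruct (H1 (S k) x Hx) as [Br Bi]. split.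
    + pose proof (dpl_lin2 _ _ (-1) (- (INR k + /2)) x _ _ (dpl_mult' id _ x _ _ (derivable_pt_lim_id x) Bi) Ai).
      eapply dpl_ext; [|eapply dpl_val; [exact H|]].
      intros y; unfold Bfam, id; simpl; ring.
      unfold Bfam, id; rewrite S_INR; simpl; ring.
    + pose proof (dpl_lin2 _ _ 1 (INR k + /2) x _ _ (dpl_mult' id _ x _ _ (derivable_pt_lim_id x) Br) Ar).
      eapply dpl_ext; [|eapply dpl_val; [exact H|]].
      intros y; unfold Bfam, id; simpl; ring.
      unfold Bfam, id; rewrite S_INR; simpl; ring.
  - intros k n. destruct (HB (S k) (n + 1)%Z) as [M1 HM1]. destruct (HB k n) as [M2 HM2].
    exists (M1 + (INR k + /2) * M2). intros x Hx. unfold Bfam. rewrite Cnorm_Ci.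
    pose proof (Cnorm_tri (Cscal x (D (S k) x)) (Cscal (INR k + / 2) (D k x))).
    rewrite !Cnorm_scal in H. rewrite Rabs_right in H by lra.
    rewrite (Rabs_right (INR k + /2)) in H by (pose proof (pos_INR k); lra).
    specialize (HM1 x Hx). specialize (HM2 x Hx).
    rewrite powerRZ_add in HM1 by lra. simpl in HM1.
    pose proof (powerRZ_lt x n Hx). pose proof (pos_INR k).
    apply Rle_trans with (powerRZ x n * (x * Cnorm (D (S k) x) + (INR k + / 2) * Cnorm (D k x))).
    apply Rmult_le_compat_l; lra. nra.
Qed.

Lemma SB_ident D z : 0 < z ->
  Cmul Ci (Cadd (Cscal z (Sfam D 1 z)) (Cscal (/ 2) (Sfam D 0 z))) = Copp (Sfam (Bfam D) 0 z).
Proof.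
  intros Hz. unfold Sfam, Bfam. simpl. apply Cext; simpl; field; lra.
Qed.

From Stdlib Require Import FunctionalExtensionality.
From Coquelicot Require Coquelicot.

Module CQ.
Import Coquelicot.Coquelicot.
Lemma int_term a m lo hi : 0 <= a -> 0 <= m -> 0 < lo -> lo <= hi ->
  forall pr : Riemann_integrable (fun x => a * (m / (1 + m*x)^2)) lo hi, RiemannInt pr <= a.
Proof.
  intros Ha Hm Hlo Hlh pr. rewrite <- RInt_Reals.
  assert (H: is_RInt (fun x => a * (m / (1 + m*x)^2)) lo hi (minus ((fun x => - a / (1 + m*x)) hi) ((fun x => - a / (1 + m*x)) lo))).
  { apply (@is_RInt_derive R_CompleteNormedModule (fun x => - a / (1 + m*x)) (fun x => a * (m / (1 + m*x)^2))).
    - intros x Hx. rewrite Rmin_left, Rmax_right in Hx by lra. auto_derive. nra. field. nra.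
    - intros x Hx. rewrite Rmin_left, Rmax_right in Hx by lra.
      apply continuity_pt_filterlim. apply derivable_continuous_pt.
      eexists. apply is_derive_Reals. auto_derive. nra. reflexivity. }
  rewrite (is_RInt_unique _ _ _ _ H). unfold minus, plus, opp; simpl.
  assert (0 <= a / (1 + m * hi)). { apply Rdiv_le_0_compat; nra. }
  assert (a / (1 + m * lo) <= a). { unfold Rdiv. rewrite <- (Rmult_1_r a) at 2. apply Rmult_le_compat_l; auto.
     rewrite <- Rinv_1. apply Rinv_le_contravar; nra. }
  unfold Rdiv in *. lra.
Qed.

Lemma cont_term a m x : 0 <= m -> 0 < x -> continuity_pt (fun x => a * (m / (1 + m*x)^2)) x.
Proof.
  intros Hm Hx. apply derivable_continuous_pt. eexists. apply is_derive_Reals. auto_derive. nra. reflexivity.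
Qed.
End CQ.

Definition Ccont (h : R -> Cplx) (x : R) := continuity_pt (fun t => Cre (h t)) x /\ continuity_pt (fun t => Cim (h t)) x.

Lemma cont_ext f g x : (forall y, f y = g y) -> continuity_pt f x -> continuity_pt g x.
Proof. intros H. replace g with f by (extensionality y; auto). auto. Qed.

Lemma cont_plus' f g x : continuity_pt f x -> continuity_pt g x -> continuity_pt (fun t => f t + g t) x.
Proof. intros. apply cont_ext with (f + g)%F. intros; reflexivity. apply continuity_pt_plus; auto. Qed.
Lemma cont_minus' f g x : continuity_pt f x -> continuity_pt g x -> continuity_pt (fun t => f t - g t) x.
Proof. intros. apply cont_ext with (f - g)%F. intros; reflexivity. apply continuity_pt_minus; auto. Qed.
Lemma cont_mult' f g x : continuity_pt f x -> continuity_pt g x -> continuity_pt (fun t => f t * g t) x.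
Proof. intros. apply cont_ext with (f * g)%F. intros; reflexivity. apply continuity_pt_mult; auto. Qed.
Lemma cont_const' a x : continuity_pt (fun _ => a) x.
Proof. apply continuity_pt_const. intros u v; reflexivity. Qed.
Lemma cont_scale g a x : continuity_pt g (a * x) -> continuity_pt (fun t => g (a * t)) x.
Proof.
  intros H. assert (continuity_pt (fun t => a * t) x).
  { apply derivable_continuous_pt. exists a. apply (dpl_val _ _ (a * 1)). apply dpl_scal'.
    apply dpl_ext with id. intros; reflexivity. apply derivable_pt_lim_id. ring. }
  eapply cont_ext; [|apply (continuity_pt_comp _ _ x H0 H)]. intros; reflexivity.
Qed.

Lemma Ccont_add h g x : Ccont h x -> Ccont g x -> Ccont (fun t => Cadd (h t) (g t)) x.
Proof. intros [A B] [C E]. split; simpl; apply cont_plus'; auto. Qed.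
Lemma Ccont_sub h g x : Ccont h x -> Ccont g x -> Ccont (fun t => Csub (h t) (g t)) x.
Proof. intros [A B] [C E]. split; simpl; eapply cont_ext; [| apply (cont_minus' _ _ x A C) | | apply (cont_minus' _ _ x B E)];
  intros; simpl; ring. Qed.
Lemma Ccont_cmul z h x : Ccont h x -> Ccont (fun t => Cmul z (h t)) x.
Proof. intros [A B]. split; simpl.
  apply cont_minus'; apply cont_mult'; auto; apply cont_const'.
  apply cont_plus'; apply cont_mult'; auto; apply cont_const'. Qed.
Lemma Ccont_zero x : Ccont (fun _ => Czero) x.
Proof. split; apply cont_const'. Qed.
Lemma Ccont_normsq h x : Ccont h x -> continuity_pt (fun t => Cnorm (h t) ^ 2) x.
Proof. intros [A B]. apply cont_ext with (fun t => Cre (h t) * Cre (h t) + Cim (h t) * Cim (h t)).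
  intros y; rewrite Cnorm_sq; ring. apply cont_plus'; apply cont_mult'; auto. Qed.
Lemma Ccont_deriv h h' x : Cderiv h h' x -> Ccont h x.
Proof. intros [A B]. split; apply derivable_continuous_pt; eexists; eauto. Qed.
Lemma Ccont_scale h a x : Ccont h (a * x) -> Ccont (fun t => h (a * t)) x.
Proof. intros [A B]. split; apply (cont_scale (fun t => _ (h t))); auto. Qed.
Lemma Ccont_Tpart c h N x : (forall m, (1 <= m)%nat -> Ccont h (INR m * x)) -> Ccont (Tpart c h N) x.
Proof.
  intros H. unfold Tpart. induction N.
  - simpl. apply Ccont_zero.
  - simpl. apply (Ccont_add (fun t => Csum_to (fun n => Cmul (c n) (h (INR n * t))) N) (fun t => Cmul (c (S N)) (h (INR (S N) * t)))); auto.
    apply Ccont_cmul. apply (Ccont_scale h). apply H; lia.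
Qed.


Fixpoint Rseg (g : nat -> R) (N k : nat) : R :=
  match k with O => 0 | S k' => Rseg g N k' + g (S (N + k')) end.

Lemma Rseg_sum g N k : Rseg g N k = Rsum_to g (N + k) - Rsum_to g N.
Proof. induction k. rewrite Nat.add_0_r; simpl; ring. rewrite Nat.add_succ_r. simpl. rewrite IHk. ring. Qed.

Lemma Rseg_scal C g N k : Rseg (fun m => C * g m) N k = C * Rseg g N k.
Proof. induction k; simpl; [ring|rewrite IHk; ring]. Qed.

Lemma Rseg_le g h N k : (forall m, (1 <= m)%nat -> g m <= h m) -> Rseg g N k <= Rseg h N k.
Proof. intros H. induction k; simpl. lra. pose proof (H (S (N+k)) ltac:(lia)). lra. Qed.

Lemma Rseg_nonneg g N k : (forall m, 0 <= g m) -> 0 <= Rseg g N k.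
Proof. intros H. induction k; simpl. lra. pose proof (H (S (N+k))). lra. Qed.

Lemma Cseg_norm u N k : Cnorm (Csub (Csum_to u N) (Csum_to u (N + k))) <= Rseg (fun m => Cnorm (u m)) N k.
Proof.
  induction k.
  - rewrite Nat.add_0_r. replace (Csub (Csum_to u N) (Csum_to u N)) with Czero.
    rewrite Cnorm_zero; simpl; lra. apply Cext; unfold Csub, Cadd, Copp; simpl; ring.
  - rewrite Nat.add_succ_r. simpl Rseg.
    replace (Csub (Csum_to u N) (Csum_to u (S (N + k)))) with
      (Cadd (Csub (Csum_to u N) (Csum_to u (N + k))) (Copp (u (S (N + k))))).
    eapply Rle_trans. apply Cnorm_tri. rewrite Cnorm_opp. lra.
    apply Cext; unfold Csub, Cadd, Copp; simpl; ring.
Qed.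

Lemma jensen_step A W Q w z : 0 <= A -> 0 <= W -> 0 <= Q -> 0 <= w -> 0 <= z -> A ^ 2 <= W * Q ->
  (A + w * z) ^ 2 <= (W + w) * (Q + w * z ^ 2).
Proof.
  intros HA HW HQ Hw Hz H.
  assert (K : 0 <= W * z ^ 2 + Q - 2 * A * z).
  { destruct (Req_dec W 0) as [E|E].
    - subst. assert (A = 0) by nra. subst. nra.
    - assert (0 < W) by lra.
      assert (0 <= W * (W * z ^ 2 + Q - 2 * A * z)).
      { replace (W * (W * z ^ 2 + Q - 2 * A * z)) with ((W * z - A) ^ 2 + (W * Q - A ^ 2)) by ring.
        pose proof (pow2_ge_0 (W * z - A)). lra. }
      apply Rmult_le_reg_l with W; auto. lra. }
  replace ((W + w) * (Q + w * z ^ 2)) with (W * Q + w * (W * z ^ 2 + Q - 2 * A * z) + 2 * A * w * z + w * w * z ^ 2) by ring.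
  assert (0 <= w * (W * z ^ 2 + Q - 2 * A * z)) by nra. nra.
Qed.

Lemma jensen w z N k : (forall m, 0 <= w m) -> (forall m, 0 <= z m) ->
  Rseg (fun m => w m * z m) N k ^ 2 <= Rseg w N k * Rseg (fun m => w m * z m ^ 2) N k.
Proof.
  intros Hw Hz. induction k.
  - simpl. lra.
  - simpl Rseg. apply jensen_step; auto.
    apply Rseg_nonneg; intros; apply Rmult_le_pos; auto.
    apply Rseg_nonneg; auto.
    apply Rseg_nonneg; intros; apply Rmult_le_pos; auto. pose proof (Hz m); nra.
Qed.

Lemma int_G (al : nat -> R) lo hi N k : (forall m, 0 <= al m) -> 0 < lo -> lo <= hi ->
  exists pr : Riemann_integrable (fun x => Rseg (fun m => al m * (INR m / (1 + INR m * x) ^ 2)) N k) lo hi,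
    RiemannInt pr <= Rseg al N k.
Proof.
  intros Hal Hlo Hlh. induction k.
  - exists (RiemannInt_P14 lo hi 0). change (@RiemannInt (fct_cte 0) lo hi (RiemannInt_P14 lo hi 0) <= 0).
    rewrite RiemannInt_P15. lra.
  - destruct IHk as [pr1 H1].
    set (m := S (N + k)).
    assert (pr2 : Riemann_integrable (fun x => al m * (INR m / (1 + INR m * x) ^ 2)) lo hi).
    { apply continuity_implies_RiemannInt; auto. intros x Hx. apply CQ.cont_term. apply pos_INR. lra. }
    pose proof (RiemannInt_P10 1 pr1 pr2) as pr3.
    assert (pr4 : Riemann_integrable (fun x => Rseg (fun m => al m * (INR m / (1 + INR m * x) ^ 2)) N (S k)) lo hi).
    { refine (Riemann_integrable_ext (fun x => Rseg (fun m => al m * (INR m / (1 + INR m * x) ^ 2)) N (S k)) _ pr3).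
      intros; simpl; unfold m; ring. }
    exists pr4.
    rewrite (RiemannInt_P18 pr4 pr3 Hlh) by (intros; simpl; unfold m; ring).
    rewrite (RiemannInt_P12 pr1 pr2 pr3 Hlh).
    pose proof (CQ.int_term (al m) (INR m) lo hi (Hal m) (pos_INR m) Hlo Hlh pr2).
    change (Rseg al N (S k)) with (Rseg al N k + al m). lra.
Qed.


Lemma Rdiv_le_0_compat a b : 0 <= a -> 0 < b -> 0 <= a / b.
Proof. intros. unfold Rdiv. apply Rmult_le_pos; auto. left; apply Rinv_0_lt_compat; auto. Qed.

Lemma sqrt_le_self x : 1 <= x -> sqrt x <= x.
Proof. intros H. rewrite <- (sqrt_pow2 x) at 2 by lra. apply sqrt_le_1_alt. nra. Qed.

Lemma cv_scal u l C : Un_cv u l -> Un_cv (fun n => C * u n) (C * l).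
Proof.
  intros H e He. destruct (H (e / (Rabs C + 1))) as [N HN]. apply Rdiv_lt_0_compat; [lra|pose proof (Rabs_pos C); lra].
  exists N. intros n Hn. specialize (HN n Hn). unfold R_dist in *.
  replace (C * u n - C * l) with (C * (u n - l)) by ring. rewrite Rabs_mult.
  pose proof (Rabs_pos C). pose proof (Rabs_pos (u n - l)).
  apply Rle_lt_trans with ((Rabs C + 1) * Rabs (u n - l)). nra.
  apply Rmult_lt_reg_l with (/ (Rabs C + 1)). apply Rinv_0_lt_compat; lra.
  rewrite <- Rmult_assoc, Rinv_l by lra. lra.
Qed.

Definition wcf (c : nat -> Cplx) (m : nat) : R := Cnorm (c m) / sqrt (INR m).

Lemma wcf_nonneg c m : 0 <= wcf c m.
Proof.
  unfold wcf. destruct m. simpl. rewrite sqrt_0, Rdiv_0_r. lra.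
  apply Rdiv_le_0_compat. apply Cnorm_nonneg. apply sqrt_lt_R0. pose proof (pos_INR m); rewrite S_INR; lra.
Qed.

Section L2.
Variables (c : nat -> Cplx) (Hf U : R -> Cplx) (K Tl : R).
Hypothesis HK : 0 <= K.
Hypothesis HTl : Un_cv (Rsum_to (wcf c)) Tl.
Hypothesis Hcont : forall x, 0 < x -> Ccont Hf x.
Hypothesis HUc : forall x, 0 < x -> Ccont U x.
Hypothesis Hbd : forall x, 0 < x -> Cnorm (Hf x) <= K / (1 + x).
Hypothesis HU : forall x, 0 < x -> Cseries_lim (fun m => Cmul (c m) (Hf (INR m * x))) (U x).

Lemma wc_nn : nonneg1 (wcf c).
Proof. intros m _; apply wcf_nonneg. Qed.

Lemma FP_bound N k x : 0 < x ->
  Cnorm (Csub (Tpart c Hf N x) (Tpart c Hf (N + k) x)) ^ 2 <=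
  Rseg (fun m => (Rseg (wcf c) N k * K ^ 2 * wcf c m) * (INR m / (1 + INR m * x) ^ 2)) N k.
Proof.
  intros Hx.
  set (z := fun m => sqrt (INR m) * (K / (1 + INR m * x))).
  assert (Hz : forall m, 0 <= z m).
  { intros m. unfold z. apply Rmult_le_pos. apply sqrt_pos. apply Rdiv_le_0_compat; auto.
    pose proof (pos_INR m); nra. }
  pose proof (Cseg_norm (fun n => Cmul (c n) (Hf (INR n * x))) N k) as H1.
  assert (H2 : Rseg (fun m => Cnorm (Cmul (c m) (Hf (INR m * x)))) N k <= Rseg (fun m => wcf c m * z m) N k).
  { apply Rseg_le. intros m Hm. rewrite Cnorm_mul.
    assert (Hm' : 0 < INR m) by (apply lt_0_INR; lia).
    assert (Hs : 0 < sqrt (INR m)) by (apply sqrt_lt_R0; auto).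
    replace (wcf c m * z m) with (Cnorm (c m) * (K / (1 + INR m * x))).
    apply Rmult_le_compat_l. apply Cnorm_nonneg. apply Hbd. nra.
    unfold wcf, z. field. split; nra. }
  pose proof (jensen (wcf c) z N k (wcf_nonneg c) Hz) as H3.
  unfold Tpart.
  assert (H0 : 0 <= Cnorm (Csub (Csum_to (fun n => Cmul (c n) (Hf (INR n * x))) N)
                              (Csum_to (fun n => Cmul (c n) (Hf (INR n * x))) (N + k)))) by apply Cnorm_nonneg.
  apply Rle_trans with (Rseg (fun m => wcf c m * z m) N k ^ 2). apply pow_incr. split; auto. lra.
  eapply Rle_trans. apply H3. rewrite <- Rseg_scal. right. f_equal. extensionality m.
  unfold z. rewrite Rpow_mult_distr, pow2_sqrt by apply pos_INR.
  assert (0 < 1 + INR m * x) by (pose proof (pos_INR m); nra). field. lra.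
Qed.

Lemma Tpart_cont N x : 0 < x -> Ccont (Tpart c Hf N) x.
Proof. intros Hx. apply Ccont_Tpart. intros m Hm. apply Hcont. apply Rmult_lt_0_compat; auto. apply lt_0_INR; lia. Qed.

Lemma dom_lo lo m x : 0 < lo -> lo <= x -> (1 <= m)%nat ->
  Cnorm (Cmul (c m) (Hf (INR m * x))) <= K / lo * wcf c m.
Proof.
  intros Hlo Hx Hm. rewrite Cnorm_mul.
  assert (Hm' : 1 <= INR m) by (apply (le_INR 1); lia).
  assert (Hs : 0 < sqrt (INR m)) by (apply sqrt_lt_R0; lra).
  pose proof (sqrt_le_self _ Hm').
  eapply Rle_trans. apply Rmult_le_compat_l. apply Cnorm_nonneg. apply Hbd. nra.
  unfold wcf. pose proof (Cnorm_nonneg (c m)).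
  replace (Cnorm (c m) * (K / (1 + INR m * x))) with ((Cnorm (c m) * K) * / (1 + INR m * x)) by (field; nra).
  replace (K / lo * (Cnorm (c m) / sqrt (INR m))) with ((Cnorm (c m) * K) * / (lo * sqrt (INR m))) by (field; lra).
  apply Rmult_le_compat_l. nra. apply Rinv_le_contravar. nra. nra.
Qed.

Lemma L2_core N lo hi : 0 < lo -> lo <= hi ->
  exists pr : Riemann_integrable (fun x => Cnorm (Csub (Tpart c Hf N x) (U x)) ^ 2) lo hi,
    RiemannInt pr <= K ^ 2 * (Tl - Rsum_to (wcf c) N) ^ 2.
Proof.
  intros Hlo Hlh.
  assert (prF : Riemann_integrable (fun x => Cnorm (Csub (Tpart c Hf N x) (U x)) ^ 2) lo hi).
  { apply continuity_implies_RiemannInt; auto. intros x Hx.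
    apply Ccont_normsq. apply (Ccont_sub (Tpart c Hf N) U). apply Tpart_cont; lra. apply HUc; lra. }
  exists prF.
  set (w2 := fun m => K / lo * wcf c m).
  assert (Hw2 : nonneg1 w2). { intros m _. unfold w2. apply Rmult_le_pos. apply Rdiv_le_0_compat; lra. apply wcf_nonneg. }
  assert (HTl2 : Un_cv (Rsum_to w2) (K / lo * Tl)).
  { unfold w2. eapply (Un_cv_ext (fun n => K / lo * Rsum_to (wcf c) n)). intros; rewrite Rsum_scal; reflexivity.
    apply cv_scal; auto. }
  assert (Hkl : 0 <= K / lo) by (apply Rdiv_le_0_compat; lra).
  assert (HTN : forall n, 0 <= Rsum_to (wcf c) n <= Tl).
  { intros n. split. apply Rsum_nonneg, wc_nn. apply cv_upper; auto. apply wc_nn. }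
  set (R0 := K / lo * Tl).
  assert (HTp : forall P x, lo <= x -> Cnorm (Tpart c Hf P x) <= R0).
  { intros P x Hx. unfold Tpart. eapply Rle_trans. apply Csum_to_norm.
    apply Rle_trans with (Rsum_to w2 P).
    { induction P. simpl; lra. cbn [Rsum_to]. pose proof (dom_lo lo (S P) x Hlo Hx ltac:(lia)). unfold w2 in *. lra. }
    unfold w2, R0. rewrite Rsum_scal. apply Rmult_le_compat_l; auto. apply HTN. }
  assert (HUb : forall x, lo <= x -> Cnorm (U x) <= R0).
  { intros x Hx. apply (series_bound _ w2 _ _ (HU x ltac:(lra))).
    intros m Hm. apply dom_lo; auto. intros n. apply cv_upper; auto. }
  assert (Htail : forall P x, lo <= x -> Cnorm (Csub (U x) (Tpart c Hf P x)) <= K / lo * Tl - Rsum_to w2 P).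
  { intros P x Hx. apply (series_tail _ w2); auto. intros m Hm; apply dom_lo; auto. apply HU; lra. }
  apply Rle_plus_epsilon. intros eps Heps.
  set (delta := eps / (hi - lo + 1)).
  assert (Hdelta : 0 < delta) by (apply Rdiv_lt_0_compat; lra).
  destruct (HTl2 (delta / (4 * R0 + 1))) as [P0 HP0].
  { apply Rdiv_lt_0_compat; auto. assert (0 <= R0) by (unfold R0; pose proof (HTN 0%nat); nra). lra. }
  set (P := max N P0). set (k := (P - N)%nat).
  assert (HPk : P = (N + k)%nat) by (unfold k, P; lia).
  specialize (HP0 P ltac:(unfold P; lia)). unfold R_dist in HP0.
  assert (HR0 : 0 <= R0) by (unfold R0; pose proof (HTN 0%nat); nra).
  set (E := K / lo * Tl - Rsum_to w2 P).
  assert (HE : 0 <= E /\ E * (4 * R0) <= delta).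
  { pose proof (cv_upper w2 (K / lo * Tl) P Hw2 HTl2). unfold E. split. lra.
    rewrite Rabs_minus_sym, Rabs_right in HP0 by lra.
    apply Rle_trans with ((K / lo * Tl - Rsum_to w2 P) * (4 * R0 + 1)). nra.
    apply Rmult_le_reg_r with (/ (4 * R0 + 1)). apply Rinv_0_lt_compat; lra.
    rewrite Rmult_assoc, Rinv_r by lra. unfold Rdiv in HP0. lra. }
  set (FP := fun x => Cnorm (Csub (Tpart c Hf N x) (Tpart c Hf P x)) ^ 2).
  assert (prFP : Riemann_integrable FP lo hi).
  { apply continuity_implies_RiemannInt; auto. intros x Hx. unfold FP.
    apply Ccont_normsq. apply (Ccont_sub (Tpart c Hf N) (Tpart c Hf P)); apply Tpart_cont; lra. }
  assert (Hpt : forall x, lo < x < hi -> Cnorm (Csub (Tpart c Hf N x) (U x)) ^ 2 <= FP x + 1 * fct_cte delta x).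
  { intros x Hx. unfold FP, fct_cte.
    set (a := Cnorm (Csub (Tpart c Hf N x) (U x))). set (b := Cnorm (Csub (Tpart c Hf N x) (Tpart c Hf P x))).
    assert (Hab : a <= b + E).
    { unfold a, b. eapply Rle_trans. apply (Csub_tri3 _ (Tpart c Hf P x)).
      rewrite (Cnorm_sub_sym (Tpart c Hf P x)). pose proof (Htail P x ltac:(lra)). unfold E; lra. }
    assert (Ha : 0 <= a <= 2 * R0).
    { split. apply Cnorm_nonneg. unfold a. eapply Rle_trans. apply Cnorm_sub_tri.
      pose proof (HTp N x ltac:(lra)); pose proof (HUb x ltac:(lra)); lra. }
    assert (Hb : 0 <= b <= 2 * R0).
    { split. apply Cnorm_nonneg. unfold b. eapply Rle_trans. apply Cnorm_sub_tri.
      pose proof (HTp N x ltac:(lra)); pose proof (HTp P x ltac:(lra)); lra. }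
    destruct HE as [HE1 HE2].
    destruct (Rle_dec a b). nra.
    assert (a ^ 2 - b ^ 2 = (a - b) * (a + b)) by ring. nra. }
  pose proof (RiemannInt_P10 1 prFP (RiemannInt_P14 lo hi delta)) as prS.
  pose proof (RiemannInt_P19 prF prS Hlh Hpt) as Hle1.
  rewrite (RiemannInt_P12 prFP (RiemannInt_P14 lo hi delta) prS Hlh) in Hle1.
  rewrite RiemannInt_P15 in Hle1.
  set (T := Rseg (wcf c) N k).
  destruct (int_G (fun m => T * K ^ 2 * wcf c m) lo hi N k) as [prG HG]; auto.
  { intros m. apply Rmult_le_pos. apply Rmult_le_pos. apply Rseg_nonneg, wcf_nonneg. apply pow_le; auto. apply wcf_nonneg. }
  pose proof (RiemannInt_P19 prFP prG Hlh) as Hle2.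
  assert (HFG : RiemannInt prFP <= RiemannInt prG).
  { apply Hle2. intros x Hx. unfold FP. rewrite HPk. apply FP_bound. lra. }
  rewrite Rseg_scal in HG. 
  assert (HT : 0 <= T <= Tl - Rsum_to (wcf c) N).
  { unfold T. rewrite Rseg_sum. split. pose proof (Rsum_mono (wcf c) N k wc_nn). lra.
    pose proof (cv_upper (wcf c) Tl (N + k) wc_nn HTl). lra. }
  assert (T * K ^ 2 * T <= K ^ 2 * (Tl - Rsum_to (wcf c) N) ^ 2).
  { pose proof (pow2_ge_0 K). destruct HT. 
    replace (K ^ 2 * (Tl - Rsum_to (wcf c) N) ^ 2) with (K ^ 2 * ((Tl - Rsum_to (wcf c) N) * (Tl - Rsum_to (wcf c) N))) by ring.
    replace (T * K ^ 2 * T) with (K ^ 2 * (T * T)) by ring. apply Rmult_le_compat_l; auto. nra. }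
  assert (delta * (hi - lo) <= eps).
  { apply Rle_trans with (delta * (hi - lo + 1)). apply Rmult_le_compat_l; lra.
    unfold delta; right; field; lra. }
  unfold T in *. lra.
Qed.

Lemma L2_final : L2conv (Tpart c Hf) U /\ inL2 U.
Proof.
  split.
  - intros e He. set (dl := Rmin 1 (e / (K ^ 2 + 1))).
    assert (Hdl : 0 < dl). { unfold dl. apply Rmin_pos. lra. apply Rdiv_lt_0_compat; auto. pose proof (pow2_ge_0 K); lra. }
    destruct (HTl dl Hdl) as [N0 HN0]. exists N0. intros N HN lo hi Hlo Hlh.
    destruct (L2_core N lo hi Hlo Hlh) as [pr Hpr]. exists pr.
    eapply Rle_trans. exact Hpr.
    specialize (HN0 N HN). unfold R_dist in HN0.
    pose proof (cv_upper (wcf c) Tl N wc_nn HTl).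
    rewrite Rabs_minus_sym, Rabs_right in HN0 by lra.
    assert (H1 : dl <= 1) by apply Rmin_l. assert (H2 : dl <= e / (K ^ 2 + 1)) by apply Rmin_r.
    assert (H3 : (Tl - Rsum_to (wcf c) N) ^ 2 <= dl) by nra.
    assert (H4 : K ^ 2 * dl <= e).
    { pose proof (pow2_ge_0 K). apply Rle_trans with ((K ^ 2 + 1) * (e / (K ^ 2 + 1))). nra.
      right; field; lra. }
    pose proof (pow2_ge_0 K). nra.
  - exists (K ^ 2 * (Tl - 0) ^ 2). intros lo hi Hlo Hlh.
    destruct (L2_core 0 lo hi Hlo Hlh) as [pr Hpr].
    replace (fun x => Cnorm (U x) ^ 2) with (fun x => Cnorm (Csub (Tpart c Hf 0 x) (U x)) ^ 2).
    exists pr. exact Hpr.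
    extensionality x. unfold Tpart; simpl Csum_to. rewrite Cnorm_sub_sym. f_equal. f_equal.
    apply Cext; unfold Csub, Cadd, Copp, Czero; simpl; ring.
Qed.
End L2.


Lemma cont_loc f g x : 0 < x -> (forall y, 0 < y -> f y = g y) -> continuity_pt f x -> continuity_pt g x.
Proof.
  intros Hx H Hc e He. destruct (Hc e He) as [al [Hal Hf]]. exists (Rmin al x). split.
  apply Rmin_pos; lra.
  intros y [Hy1 Hy2]. simpl in *. unfold R_dist in *.
  assert (Hy : 0 < y). { pose proof (Rmin_r al x). apply Rabs_def2 in Hy2. lra. }
  rewrite <- !H by auto. apply Hf. split; auto. pose proof (Rmin_l al x). lra.
Qed.

Lemma Ccont_loc h h' x : 0 < x -> (forall y, 0 < y -> h y = h' y) -> Ccont h x -> Ccont h' x.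
Proof. intros Hx H [A B]. split.
  - apply (cont_loc (fun t => Cre (h t))); auto. intros y Hy; rewrite H; auto.
  - apply (cont_loc (fun t => Cim (h t))); auto. intros y Hy; rewrite H; auto.
Qed.

Lemma term_bound (d Q : Cplx) (lam x M : R) (k : nat) : 0 < lam -> 0 < x ->
  powerRZ (lam * x) (Z.of_nat (S k)) * Cnorm Q <= M ->
  Cnorm (Cmul d (Cscal (lam ^ k) Q)) <= Cnorm d * / lam * M / x ^ (S k).
Proof.
  intros Hl Hx H. rewrite <- pow_powerRZ in H. rewrite Cnorm_mul, Cnorm_scal.
  rewrite Rabs_right by (apply Rle_ge, pow_le; lra).
  assert (Hp : 0 < (lam * x) ^ S k) by (apply pow_lt; nra).
  assert (HQ : Cnorm Q <= M / (lam * x) ^ S k).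
  { apply Rmult_le_reg_l with ((lam * x) ^ S k); auto. field_simplify; lra. }
  pose proof (Cnorm_nonneg d). pose proof (pow_lt lam k Hl).
  replace (Cnorm d * / lam * M / x ^ S k) with (Cnorm d * (lam ^ k * (M / (lam * x) ^ S k))).
  apply Rmult_le_compat_l; auto. apply Rmult_le_compat_l; lra.
  rewrite Rpow_mult_distr. simpl. field. repeat split; try apply pow_nonzero; lra.
Qed.

Lemma S0_nonnegM (D : nat -> R -> Cplx) k n M : (forall x, 0 < x -> powerRZ x n * Cnorm (D k x) <= M) -> 0 <= M.
Proof. intros H. specialize (H 1 Rlt_0_1). pose proof (powerRZ_lt 1 n Rlt_0_1). pose proof (Cnorm_nonneg (D k 1)). nra. Qed.

Lemma pow_le_lo lo x j : 0 < lo -> lo <= x -> / x ^ j <= / lo ^ j.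
Proof. intros. apply Rinv_le_contravar. apply pow_lt; auto. apply pow_incr; lra. Qed.


Lemma scale_B d lam Psi Psi2 V0 V1 W x : 0 < x -> (forall n, (1 <= n)%nat -> 0 < lam n) ->
  Cseries_lim (fun n => sterm d lam Psi 0 n x) V0 -> Cseries_lim (fun n => sterm d lam Psi 1 n x) V1 ->
  Cseries_lim (fun n => sterm d lam Psi2 0 n x) W ->
  (forall z, 0 < z -> Cmul Ci (Cadd (Cscal z (Psi 1%nat z)) (Cscal (/ 2) (Psi 0%nat z))) = Copp (Psi2 0%nat z)) ->
  Cmul Ci (Cadd (Cscal x V1) (Cscal (/ 2) V0)) = Copp W.
Proof.
  intros Hx Hlam H0 H1 H2 HP.
  pose proof (series_cmul Ci _ _ (series_add _ _ _ _ (series_scal x _ _ H1) (series_scal (/2) _ _ H0))) as HL.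
  pose proof (series_scal (-1) _ _ H2) as HR.
  replace (Copp W) with (Cscal (-1) W) by (apply Cext; simpl; ring).
  eapply series_unique; [exact HL|]. eapply series_ext; [|exact HR].
  intros n Hn. specialize (Hlam n Hn). specialize (HP (lam n * x) ltac:(nra)).
  unfold sterm. simpl pow.
  transitivity (Cmul (d n) (Copp (Psi2 0%nat (lam n * x)))).
  - apply Cext; simpl; ring.
  - rewrite <- HP. apply Cext; simpl; ring.
Qed.

Definition dA (a : nat -> Cplx) (n : nat) : Cplx := Cscal (/ INR n) (a n).
Definition lamA (n : nat) : R := / INR n.

Section Cons.
Variables (a c : nat -> Cplx) (SA : R).
Hypothesis HSA : forall N, Rsum_to (fun n => Cnorm (a n)) N <= SA.
Hypothesis HSc : bsum (wcf c).

Lemma lamA_pos n : (1 <= n)%nat -> 0 < lamA n.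
Proof. intros. unfold lamA. apply Rinv_0_lt_compat, lt_0_INR; lia. Qed.
Lemma INR_pos n : (1 <= n)%nat -> 0 < INR n.
Proof. intros. apply lt_0_INR; lia. Qed.

Lemma construct f Df : in_S0 f Df -> exists (HH Du : nat -> R -> Cplx) (g : R -> Cplx),
  (forall k t, 0 < t -> Cseries_lim (fun n => sterm (dA a) lamA (Sfam Df) k n t) (HH k t)) /\
  (forall k x, 0 < x -> Cseries_lim (fun m => sterm c INR HH k m x) (Du k x)) /\
  is_derivs (Du 0%nat) Du /\ T_pointwise a f g /\ L2conv (Tpart c (opS g)) (Du 0%nat) /\ inL2 (Du 0%nat).
Proof.
  intros hf. pose proof (Sfam_S0 f Df hf) as [[_ hEd] hEb].
  assert (HSA0 : 0 <= SA) by (apply (HSA 0%nat)).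
  assert (Hwa : nonneg1 (fun n => Cnorm (a n))) by (intros n _; apply Cnorm_nonneg).
  destruct (scale_smooth (dA a) lamA (Sfam Df) lamA_pos hEd (fun n => Cnorm (a n)) Hwa (ex_intro _ SA HSA))
    as [HH [HHs HHd]].
  { intros k lo Hlo. destruct (hEb k (Z.of_nat (S k))) as [M HM].
    pose proof (S0_nonnegM _ _ _ _ HM) as HM0.
    exists (M / lo ^ S k). split. apply Rdiv_le_0_compat; auto. apply pow_lt; auto.
    intros n x Hn Hx. unfold sterm. eapply Rle_trans. apply term_bound with (M := M) (x := x).
    apply lamA_pos; auto. lra. apply HM. pose proof (lamA_pos n Hn); nra.
    unfold dA, lamA. rewrite Cnorm_scal, Rabs_right by (left; apply Rinv_0_lt_compat, INR_pos; auto).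
    pose proof (INR_pos n Hn). pose proof (Cnorm_nonneg (a n)).
    replace (/ INR n * Cnorm (a n) * / / INR n * M / x ^ S k) with (Cnorm (a n) * (M * / x ^ S k)) by (field; repeat split; try apply pow_nonzero; lra).
    replace (M / lo ^ S k * Cnorm (a n)) with (Cnorm (a n) * (M * / lo ^ S k)) by (unfold Rdiv; ring).
    apply Rmult_le_compat_l; auto. apply Rmult_le_compat_l; auto. apply pow_le_lo; lra. }
  destruct HHd as [_ HHd].
  assert (HHb1 : forall k, exists M', forall t, 0 < t -> powerRZ t (Z.of_nat (S k)) * Cnorm (HH k t) <= M').
  { intros k. destruct (hEb k (Z.of_nat (S k))) as [M HM]. pose proof (S0_nonnegM _ _ _ _ HM) as HM0.
    exists (M * SA). intros t Ht. rewrite <- pow_powerRZ.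
    assert (Cnorm (HH k t) <= M / t ^ S k * SA).
    { apply (series_bound _ (fun n => M / t ^ S k * Cnorm (a n)) _ _ (HHs k t Ht)).
      - intros n Hn. unfold sterm. eapply Rle_trans. apply term_bound with (M := M) (x := t).
        apply lamA_pos; auto. lra. apply HM. pose proof (lamA_pos n Hn); nra.
        unfold dA, lamA. rewrite Cnorm_scal, Rabs_right by (left; apply Rinv_0_lt_compat, INR_pos; auto).
        pose proof (INR_pos n Hn). right. field. repeat split; try apply pow_nonzero; lra.
      - intros N. rewrite Rsum_scal. apply Rmult_le_compat_l. apply Rdiv_le_0_compat; auto. apply pow_lt; auto. auto. }
    pose proof (pow_lt t (S k) Ht).
    apply Rle_trans with (t ^ S k * (M / t ^ S k * SA)). apply Rmult_le_compat_l; lra.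
    right; field; lra. }
  assert (HHb0 : exists A0, forall t, 0 < t -> Cnorm (HH 0%nat t) <= A0).
  { destruct (hEb 0%nat 0%Z) as [M HM]. pose proof (S0_nonnegM _ _ _ _ HM) as HM0.
    exists (M * SA). intros t Ht.
    apply (series_bound _ (fun n => M * Cnorm (a n)) _ _ (HHs 0%nat t Ht)).
    - intros n Hn. unfold sterm, dA, lamA. simpl pow. rewrite Cnorm_mul, !Cnorm_scal.
      rewrite Rabs_right by (left; apply Rinv_0_lt_compat, INR_pos; auto). rewrite Rabs_R1.
      specialize (HM (/ INR n * t) ltac:(pose proof (lamA_pos n Hn); unfold lamA in *; nra)). simpl in HM.
      pose proof (INR_pos n Hn). assert (/ INR n <= 1). { rewrite <- Rinv_1. apply Rinv_le_contravar; try lra. apply (le_INR 1); lia. }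
      pose proof (Cnorm_nonneg (a n)). pose proof (Cnorm_nonneg (Sfam Df 0 (/ INR n * t))).
      assert (0 < / INR n) by (apply Rinv_0_lt_compat; lra).
      assert (HS : Cnorm (Sfam Df 0 (/ INR n * t)) <= M) by lra.
      assert (/ INR n * Cnorm (Sfam Df 0 (/ INR n * t)) <= M) by nra.
      replace (/ INR n * Cnorm (a n) * (1 * Cnorm (Sfam Df 0 (/ INR n * t)))) with
        (Cnorm (a n) * (/ INR n * Cnorm (Sfam Df 0 (/ INR n * t)))) by ring.
      rewrite (Rmult_comm M). apply Rmult_le_compat_l; auto.
    - intros N. rewrite Rsum_scal. apply Rmult_le_compat_l; auto. }
  set (w2 := fun m => Cnorm (c m) / INR m).
  assert (Hw2 : nonneg1 w2). { intros m Hm. unfold w2. apply Rdiv_le_0_compat. apply Cnorm_nonneg. apply INR_pos; auto. }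
  assert (Hw2b : bsum w2).
  { destruct HSc as [W HW]. exists W. intros N. eapply Rle_trans; [|apply (HW N)].
    clear -Hw2. induction N. simpl; lra. cbn [Rsum_to]. 
    assert (w2 (S N) <= wcf c (S N)).
    { unfold w2, wcf. pose proof (INR_pos (S N) ltac:(lia)).
      assert (1 <= INR (S N)) by (apply (le_INR 1); lia).
      pose proof (sqrt_le_self _ H0). assert (0 < sqrt (INR (S N))) by (apply sqrt_lt_R0; lra).
      unfold Rdiv. apply Rmult_le_compat_l. apply Cnorm_nonneg. apply Rinv_le_contravar; lra. }
    lra. }
  destruct (scale_smooth c INR HH INR_pos HHd w2 Hw2 Hw2b) as [Du [Dus Dud]].
  { intros k lo Hlo. destruct (HHb1 k) as [M HM].
    assert (HM0 : 0 <= M). { specialize (HM 1 Rlt_0_1). pose proof (powerRZ_lt 1 (Z.of_nat (S k)) Rlt_0_1).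
      pose proof (Cnorm_nonneg (HH k 1)). nra. }
    exists (M / lo ^ S k). split. apply Rdiv_le_0_compat; auto. apply pow_lt; auto.
    intros m x Hm Hx. unfold sterm. eapply Rle_trans. apply term_bound with (M := M) (x := x).
    apply INR_pos; auto. lra. apply HM. pose proof (INR_pos m Hm); nra.
    unfold w2. pose proof (INR_pos m Hm). pose proof (Cnorm_nonneg (c m)).
    replace (Cnorm (c m) * / INR m * M / x ^ S k) with (Cnorm (c m) / INR m * (M * / x ^ S k)) by (field; repeat split; try apply pow_nonzero; lra).
    replace (M / lo ^ S k * (Cnorm (c m) / INR m)) with (Cnorm (c m) / INR m * (M * / lo ^ S k)) by (unfold Rdiv; ring).
    apply Rmult_le_compat_l. apply Rdiv_le_0_compat; auto. apply Rmult_le_compat_l; auto. apply pow_le_lo; lra. }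
  set (g := fun y => Cscal (/ y) (HH 0%nat (/ y))).
  assert (HgS : forall x, 0 < x -> opS g x = HH 0%nat x).
  { intros x Hx. unfold opS, g. rewrite Rinv_inv. apply Cext; simpl; field; lra. }
  exists HH, Du, g. split; [auto|]. split; [auto|]. split; [auto|]. split.
  { intros y Hy. pose proof (series_scal (/ y) _ _ (HHs 0%nat (/ y) (Rinv_0_lt_compat _ Hy))) as H.
    eapply series_ext; [|exact H]. intros n Hn. pose proof (INR_pos n Hn).
    unfold sterm, dA, lamA. simpl pow.
    rewrite (Sfam0 f Df) by (auto; apply Rmult_lt_0_compat; apply Rinv_0_lt_compat; lra).
    unfold opS. rewrite Rinv_mult, !Rinv_inv. apply Cext; simpl; field; lra. }
  destruct (bsum_cv (wcf c) (wc_nn c) HSc) as [Tl HTl].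
  destruct HHb0 as [A0 HA0]. destruct (HHb1 0%nat) as [A1 HA1].
  assert (HLf : L2conv (Tpart c (opS g)) (Du 0%nat) /\ inL2 (Du 0%nat)).
  { apply (L2_final c (opS g) (Du 0%nat) (A0 + A1) Tl).
    - pose proof (HA0 1 Rlt_0_1). pose proof (HA1 1 Rlt_0_1). pose proof (Cnorm_nonneg (HH 0%nat 1)).
      pose proof (powerRZ_lt 1 (Z.of_nat 1) Rlt_0_1). nra.
    - exact HTl.
    - intros x Hx. apply (Ccont_loc (HH 0%nat)); auto. intros y Hy; rewrite HgS; auto.
      apply (Ccont_deriv _ (HH 1%nat)). apply HHd; auto.
    - intros x Hx. apply (Ccont_deriv _ (Du 1%nat)). apply Dud; auto.
    - intros x Hx. rewrite HgS by auto. specialize (HA0 x Hx). specialize (HA1 x Hx).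
      simpl in HA1. rewrite Rmult_1_r in HA1.
      apply Rmult_le_reg_r with (1 + x). lra. unfold Rdiv. rewrite Rmult_assoc, Rinv_l by lra. lra.
    - intros x Hx. eapply series_ext; [|apply (Dus 0%nat x Hx)]. intros m Hm.
      unfold sterm. simpl pow. rewrite HgS by (apply Rmult_lt_0_compat; auto; apply INR_pos; auto).
      apply Cext; simpl; ring. }
  exact HLf.
Qed.
End Cons.


Lemma L2le_transfer h h' M : (forall x, 0 < x -> Cnorm (h' x) = Cnorm (h x)) -> L2norm2_le h M -> L2norm2_le h' M.
Proof.
  intros He H lo hi Hlo Hlh. destruct (H lo hi Hlo Hlh) as [pr Hpr].
  assert (pr' : Riemann_integrable (fun x => Cnorm (h' x) ^ 2) lo hi).
  { refine (Riemann_integrable_ext _ _ pr). intros x Hx. rewrite Rmin_left in Hx by lra. rewrite He by lra. reflexivity. }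
  exists pr'. rewrite (RiemannInt_P18 pr' pr Hlh). exact Hpr. intros x Hx. rewrite He by lra. reflexivity.
Qed.

Lemma inL2_transfer h h' : (forall x, 0 < x -> Cnorm (h' x) = Cnorm (h x)) -> inL2 h -> inL2 h'.
Proof. intros He [M HM]. exists M. eapply L2le_transfer; eauto. Qed.

Lemma L2conv_transfer hN v v' : (forall x, 0 < x -> v x = v' x) -> L2conv hN v -> L2conv hN v'.
Proof.
  intros He H e He'. destruct (H e He') as [N0 HN0]. exists N0. intros N HN.
  apply (L2le_transfer (fun x => Csub (hN N x) (v x))); [|apply HN0; auto]. intros x Hx. rewrite He by auto. reflexivity.
Qed.

Lemma Rpower_ge1 n e : (1 <= n)%nat -> 0 < e -> 1 <= Rpower (INR n) e.
Proof.
  intros Hn He. rewrite <- (Rpower_O (INR n)) by (apply lt_0_INR; lia).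
  apply Rle_Rpower. apply (le_INR 1); lia. lra.
Qed.

Theorem proposition8 (a b : nat -> Cplx) (eps K0 K1 : R) (N : nat)
  (ha1 : a 1%nat <> Czero)
  (heps : 0 < eps)
  (hsa : abs_summable (fun n => Cnorm (a n) * Rpower (INR n) eps))
  (hb : is_conv_inverse a b)
  (hsb : abs_summable (fun n => Cnorm (b n) / sqrt (INR n)))
  (hL : forall x y l1 l2, Rabs y <= 1/2 + eps/2 ->
          LS a (mkC (1/2 - y) x) l1 -> LS a (mkC (1/2 + y) x) l2 ->
          l2 <> Czero /\ Cnorm (Cdiv l1 l2) <= K0 + K1 * Rabs x ^ N)
  (f : R -> Cplx) (Df : nat -> R -> Cplx) (hf : in_S0 f Df) :
  exists (u : R -> Cplx) (Du : nat -> R -> Cplx),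
    is_F_image a b f u /\
    is_derivs u Du /\ inL2 u /\
    inL2 (fun x => Cadd (Cscal x (Du 1%nat x)) (Cscal (/ 2) (u x))) /\
    is_F_image a b (opB f Df) (fun x => Copp (opB u Du x)).
Proof.
  set (c := conj_seq b).
  assert (Hua : nonneg1 (fun n => Cnorm (a n) * Rpower (INR n) eps)).
  { intros n Hn. apply Rmult_le_pos. apply Cnorm_nonneg. pose proof (Rpower_ge1 n eps Hn heps); lra. }
  destruct (abs_summable_bsum _ Hua hsa) as [SA HSA'].
  assert (HSA : forall M, Rsum_to (fun n => Cnorm (a n)) M <= SA).
  { intros M. eapply Rle_trans; [|apply (HSA' M)]. induction M. simpl; lra. cbn [Rsum_to].
    pose proof (Rpower_ge1 (S M) eps ltac:(lia) heps). pose proof (Cnorm_nonneg (a (S M))). nra. }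
  assert (HSc : bsum (wcf c)).
  { replace (wcf c) with (fun n => Cnorm (b n) / sqrt (INR n)).
    apply abs_summable_bsum; auto. intros n _. apply (wcf_nonneg b).
    extensionality n. unfold wcf, c, conj_seq. rewrite Cnorm_conj. reflexivity. }
  destruct (construct a c SA HSA HSc f Df hf) as [HH [Du [g [HHs [Dus [Dud [Tp [L2c L2i]]]]]]]].
  pose proof (Bfam_S0 f Df hf) as hf2.
  destruct (construct a c SA HSA HSc (opB f Df) (Bfam Df) hf2) as [HH2 [Du2 [g2 [HH2s [Du2s [Du2d [Tp2 [L2c2 L2i2]]]]]]]].
  assert (HHid : forall z, 0 < z -> Cmul Ci (Cadd (Cscal z (HH 1%nat z)) (Cscal (/ 2) (HH 0%nat z))) = Copp (HH2 0%nat z)).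
  { intros z Hz. apply (scale_B (dA a) lamA (Sfam Df) (Sfam (Bfam Df))); auto.
    apply lamA_pos. intros y Hy. apply SB_ident; auto. }
  assert (Hid : forall x, 0 < x -> opB (Du 0%nat) Du x = Copp (Du2 0%nat x)).
  { intros x Hx. unfold opB. apply (scale_B c INR HH HH2); auto. apply INR_pos. }
  exists (Du 0%nat), Du. split; [|split; [|split; [|split]]].
  - exists g. split; auto.
  - exact Dud.
  - exact L2i.
  - apply (inL2_transfer (Du2 0%nat)); auto. intros x Hx.
    rewrite <- (Cnorm_Ci (Cadd _ _)). change (Cnorm (opB (Du 0%nat) Du x) = Cnorm (Du2 0%nat x)).
    rewrite Hid by auto. apply Cnorm_opp.
  - exists g2. split; auto. apply (L2conv_transfer _ (Du2 0%nat)); auto.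
    intros x Hx. rewrite Hid by auto. apply Cext; simpl; ring.
Qed.
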